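(* Let $q:V\to\overline K/\overline R$ be a non-trivial generalized $(\sigma,\varepsilon)$-quadratic form with sesquilinearization $f$, such that $P_q$ spans $\mathrm{PG}(V)$. A vector subspace $U$ of $V$ satisfies $[U]\cap P_q=\emptyset$ and $[U]\cap\ell=\emptyset$ for every line $\ell$ of $\mathrm{PG}(V)$ containing at least two points of $P_q$ (i.e. $U$ defines a quotient of the inclusion embedding of $S_q$ in $\mathrm{PG}(V)$) if and only if $U\subseteq\mathrm{Rad}(f)$ and $U\cap\mathrm{Rad}(q)=\{0\}$.
   Context: $K$ division ring, $(\sigma,\varepsilon)$ admissible pair ($\sigma$ anti-automorphism, $\varepsilon^\sigma\varepsilon=1$, $t^{\sigma^2}=\varepsilon t\varepsilon^{-1}$). $\overline K=K/\{t-t^\sigma\varepsilon\}_{t\in K}$, $\bar t$ class of $t$, $\bar t\circ\lambda=\overline{\lambda^\sigma t\lambda}$; closed subgroup: stable under all $\circ\lambda$; $(\bar t+\overline R)\circ\lambda=\bar t\circ\lambda+\overline R$. Generalized $(\sigma,\varepsilon)$-quadratic form with co-defect closed $\overline R$: $q:V\to\overline K/\overline R$ ($V$ right $K$-vector space) with $q(x\lambda)=q(x)\circ\lambda$ and trace-valued $(\sigma,\varepsilon)$-sesquilinear $f$ ($f(x\lambda,y\mu)=\lambda^\sigma f(x,y)\mu$, $f(y,x)=f(x,y)^\sigma\varepsilon$, $f(x,x)\in\{t+t^\sigma\varepsilon\}$) with $q(x+y)=q(x)+q(y)+(\overline{f(x,y)}+\overline R)$. Non-trivial: not identically $\overline R$.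 $P_q$: points $[x]$ with $q(x)=\overline R$. $[U]$: set of projective points of $U$. $\mathrm{Rad}(f)=\{x:f(x,V)=0\}$, $\mathrm{Rad}(q)=\{x\in\mathrm{Rad}(f):q(x)=\overline R\}$. *)

(* Defs.v *)
From HB Require Import structures.
From mathcomp Require Import all_boot all_order all_algebra.
Set Implicit Arguments. Unset Strict Implicit. Unset Printing Implicit Defensive.
Import GRing.Theory.
Local Open Scope ring_scope.

Definition division_ring (K : unitRingType) : Prop :=
  forall x : K, x != 0 -> x \is a GRing.unit.

Definition anti_automorphism (K : unitRingType) (sigma : K -> K) : Prop :=
  [/\ forall x y, sigma (x + y) = sigma x + sigma y,
      forall x y, sigma (x * y) = sigma y * sigma x,
      sigma 1 = 1 & bijective sigma].

Definition admissible_pair (K : unitRingType) (sigma : K -> K) (eps : K) : Prop :=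
  [/\ anti_automorphism sigma, sigma eps * eps = 1
    & forall t, sigma (sigma t) = eps * t * eps^-1].

(* A subgroup Rbar of Kbar = K / {t - t^sigma eps} is encoded by its preimage
   R in K (an additive subgroup containing all t - t^sigma eps). *)
Definition closed_codefect (K : unitRingType) (sigma : K -> K) (eps : K)
    (R : K -> Prop) : Prop :=
  [/\ forall t, R (t - sigma t * eps),
      R 0,
      forall a b, R a -> R b -> R (a - b)
    & forall r l, R r -> R (sigma l * r * l)].

(* Right K-vector spaces are left modules over the converse ring K^c;
   the right scalar multiplication x.lambda is written rsc x lambda. *)
Definition rsc (K : unitRingType) (V : lmodType K^c) (x : V) (l : K) : V :=
  (l : K^c) *: x.

Definition trace_valued_sesq (K : unitRingType) (V : lmodType K^c)
    (sigma : K -> K) (eps : K) (f : V -> V -> K) : Prop :=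
  [/\ forall x y z, f (x + y) z = f x z + f y z,
      forall x y z, f x (y + z) = f x y + f x z,
      forall x y l m, f (rsc x l) (rsc y m) = sigma l * f x y * m,
      forall x y, f y x = sigma (f x y) * eps
    & forall x, exists t, f x x = t + sigma t * eps].

(* The form V -> Kbar/Rbar is given by a
   representative function q : V -> K (Kbar/Rbar is canonically K/R);
   equalities in Kbar/Rbar are equalities modulo R. *)
Definition gen_quadratic_form (K : unitRingType) (V : lmodType K^c)
    (sigma : K -> K) (eps : K) (R : K -> Prop) (q : V -> K) (f : V -> V -> K)
    : Prop :=
  [/\ closed_codefect sigma eps R,
      trace_valued_sesq sigma eps f,
      forall x l, R (q (rsc x l) - sigma l * q x * l)
    & forall x y, R (q (x + y) - q x - q y - f x y)].

Definition nontrivial_form (K : unitRingType) (V : lmodType K^c)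
    (R : K -> Prop) (q : V -> K) : Prop :=
  exists x, ~ R (q x).

Definition singular_vec (K : unitRingType) (V : lmodType K^c)
    (R : K -> Prop) (q : V -> K) (x : V) : Prop :=
  x <> 0 /\ R (q x).

Inductive lin_span (K : unitRingType) (V : lmodType K^c) (S : V -> Prop) : V -> Prop :=
  | lin_span0 : lin_span S 0
  | lin_spanS : forall x l v, S x -> lin_span S v -> lin_span S (rsc x l + v).

Definition subspace (K : unitRingType) (V : lmodType K^c) (U : V -> Prop) : Prop :=
  [/\ U 0, forall x y, U x -> U y -> U (x + y) & forall x l, U x -> U (rsc x l)].

Definition Rad_f (K : unitRingType) (V : lmodType K^c) (f : V -> V -> K) (x : V)
  : Prop := forall y, f x y = 0.

Definition Rad_q (K : unitRingType) (V : lmodType K^c) (R : K -> Prop)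
    (q : V -> K) (f : V -> V -> K) (x : V) : Prop :=
  Rad_f f x /\ R (q x).

(* Main.v *)
Require Import Defs.
From HB Require Import structures.
From mathcomp Require Import all_boot all_order all_algebra.
Local Open Scope ring_scope.
Import GRing.Theory.

Lemma rsc1 {K : unitRingType} {V : lmodType K^c} (x : V) : rsc x 1 = x.
Proof. by rewrite /rsc scale1r. Qed.

Lemma rscA {K : unitRingType} {V : lmodType K^c} (x : V) a b :
  rsc (rsc x a) b = rsc x (a * b).
Proof. by rewrite /rsc scalerA. Qed.

Lemma rscN {K : unitRingType} {V : lmodType K^c} (x : V) a :
  rsc x (- a) = - rsc x a.
Proof. by rewrite /rsc scaleNr. Qed.

Lemma rscD {K : unitRingType} {V : lmodType K^c} (x : V) a b :
  rsc x (a + b) = rsc x a + rsc x b.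
Proof. by rewrite /rsc scalerDl. Qed.

Lemma rsc0 {K : unitRingType} {V : lmodType K^c} (x : V) : rsc x 0 = 0.
Proof. by rewrite /rsc scale0r. Qed.

Lemma S1 {G : zmodType} (A x y : G) : (A - x) - (A - y) = y - x.
Proof. by rewrite opprB addrC addrA subrK. Qed.
Lemma S2 {G : zmodType} (x y : G) : (x + y) - x = y.
Proof. by rewrite addrC addKr. Qed.
Lemma S3 {G : zmodType} (x y : G) : x - (x - y) = y.
Proof. by rewrite opprB addrC subrK. Qed.
Lemma S4 {G : zmodType} (A a b c : G) : A - a - b - c = A - (a + (b + c)).
Proof. by rewrite !opprD !addrA. Qed.

Section Aux.
Context {K : unitRingType} {sigma : K -> K} {eps : K} {R : K -> Prop}.
Variable (HR : closed_codefect sigma eps R).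

Lemma R0 : R 0. Proof. by case: HR. Qed.
Lemma Rsub {a b} : R a -> R b -> R (a - b). Proof. by case: HR => _ _ h _; apply: h. Qed.
Lemma Rneg {a} : R a -> R (- a).
Proof. by move=> h; rewrite -sub0r; apply: Rsub => //; apply: R0. Qed.
Lemma Radd {a b} : R a -> R b -> R (a + b).
Proof. by move=> ha hb; rewrite -[b]opprK; apply: Rsub => //; apply: Rneg. Qed.
Lemma Rsc r l : R r -> R (sigma l * r * l). Proof. by case: HR => _ _ _ h; apply: h. Qed.
End Aux.

Theorem mainTheorem13 (K : unitRingType) (sigma : K -> K) (eps : K)
    (V : lmodType K^c) (R : K -> Prop) (q : V -> K) (f : V -> V -> K)
    (U : V -> Prop) :
  division_ring K ->
  admissible_pair sigma eps ->
  gen_quadratic_form sigma eps R q f ->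
  nontrivial_form R q ->
  (* P_q spans PG(V) *)
  (forall v : V, lin_span (singular_vec R q) v) ->
  subspace U ->
  ( ( (* [U] meets no point of P_q *)
      (forall x, U x -> ~ singular_vec R q x) /\
      (* [U] meets no line spanned by two distinct points [x] <> [y] of P_q *)
      (forall x y, singular_vec R q x -> singular_vec R q y ->
         (forall l, y <> rsc x l) ->
         forall a b, U (rsc x a + rsc y b) -> rsc x a + rsc y b = 0) )
    <->
    ( (forall x, U x -> Rad_f f x) /\
      (forall x, U x -> Rad_q R q f x -> x = 0) ) ).
Proof.
move=> Hdiv [[sD sM s1 sbij] _ _] [HR Hf Hsc Hq] _ Hspan [U0 UD US].
case: Hf => fDl fDr fsc _ _.
have f0l : forall z, f 0 z = 0.
  move=> z; have h := fDl 0 0 z; rewrite addr0 in h.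
  by apply: (addrI (f 0 z)); rewrite addr0 -h.
have f0r : forall z, f z 0 = 0.
  move=> z; have h := fDr z 0 0; rewrite addr0 in h.
  by apply: (addrI (f z 0)); rewrite addr0 -h.
have fl1 : forall x y m, f x (rsc y m) = f x y * m.
  by move=> x y m; rewrite -{1}(rsc1 x) fsc s1 mul1r.
have qsc : forall w l, R (q w) -> R (q (rsc w l)).
  move=> w l hw; rewrite -[q _](subrK (sigma l * q w * l)).
  by apply: (Radd HR); [apply: Hsc | apply: (Rsc HR)].
have fww : forall w, R (q w) -> R (f w w).
  move=> w hw.
  have e2 : w + w = rsc w (1 + 1) by rewrite rscD rsc1.
  have h1 := Hq w w. have h2 := Hsc w (1 + 1).
  rewrite -e2 in h2.
  have hs : R (sigma (1 + 1) * q w * (1 + 1)) by apply: (Rsc HR).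
  rewrite S4 in h1.
  have h3 := Rsub HR h1 h2. rewrite S1 in h3.
  have h4 := Rsub HR hs h3. rewrite S3 in h4.
  have h5 := Rsub HR h4 hw. rewrite S2 in h5.
  have h6 := Rsub HR h5 hw. by rewrite S2 in h6.
split.
- move=> [H1 H2].
  have HRq : forall x, U x -> Rad_q R q f x -> x = 0.
    move=> x Ux [_ Rx]; case: (x =P 0) => // xn0.
    by exfalso; apply: (H1 x Ux).
  split => //.
  have key : forall x p, U x -> singular_vec R q p -> f x p = 0.
    move=> x p Ux [pn0 Rp].
    case: (x =P 0) => [->|xn0]; first by apply: f0l.
    have nRx : ~ R (q x) by move=> Rx; apply: (H1 x Ux).
    case: (f x p =P 0) => // hne.
    have cu : f x p \is a GRing.unit by apply: Hdiv; apply/eqP.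
    set lam := - ((f x p)^-1 * q x).
    set y := x + rsc p lam.
    have hF : f x (rsc p lam) = - q x.
      by rewrite fl1 /lam mulrN mulrA mulrV // mul1r.
    have Ry : R (q y).
      have h := Hq x (rsc p lam). rewrite hF -/y in h.
      have hp := qsc p lam Rp.
      have -> : q y = (q y - q x - q (rsc p lam) - - q x) + q (rsc p lam).
        by rewrite opprK addrAC subrK subrK.
      exact (Radd HR h hp).
    have xE : forall l, y = rsc p l -> R (q x).
      move=> l yl; have -> : x = rsc p (l - lam).
        by rewrite rscD rscN -yl /y addrK.
      exact: qsc.
    have yn0 : y <> 0.
      move=> y0; apply: nRx; apply: (xE 0); by rewrite rsc0.
    have nmul : forall l, y <> rsc p l by move=> l yl; apply: nRx; apply: (xE l).
    exfalso; apply: xn0.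
    have -> : x = rsc p (- lam) + rsc y 1.
      by rewrite rsc1 rscN /y [x + _]addrC addKr.
    apply: (H2 p y) => //.
    by rewrite rsc1 rscN /y [x + _]addrC addKr.
  move=> x Ux z.
  elim: (Hspan z) => [|p l v Sp _ IH]; first by apply: f0r.
  by rewrite fDr fl1 IH (key x p Ux Sp) mul0r addr0.
- move=> [HF HRq]; split.
  + move=> x Ux [xn0 Rx]; apply: xn0; apply: HRq => //; split => //; exact: HF.
  + move=> x y H [yn0 Ry] _ a b Uz.
    apply: HRq => //; split; first exact: HF.
    have Rxa : R (q (rsc x a)) by apply: qsc; case: H.
    have Ryb : R (q (rsc y b)) by apply: qsc.
    have hz := HF _ Uz (rsc y b).
    rewrite fDl in hz.
    have hf : f (rsc x a) (rsc y b) = - f (rsc y b) (rsc y b).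
      by apply/eqP; rewrite -addr_eq0; apply/eqP.
    have Rf : R (f (rsc x a) (rsc y b)) by rewrite hf; apply: (Rneg HR); apply: fww.
    have h := Hq (rsc x a) (rsc y b).
    set z := rsc x a + rsc y b.
    have -> : q z = (q z - q (rsc x a) - q (rsc y b) - f (rsc x a) (rsc y b))
                    + f (rsc x a) (rsc y b) + q (rsc y b) + q (rsc x a).
      by rewrite !subrK.
    exact (Radd HR (Radd HR (Radd HR h Rf) Ryb) Rxa).
Qed.
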